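(* For every $b\in\mathbb F_{3^{2m}}$, the vector $(\mathrm{Tr}_{2m}(bt))_{t\in\mathbb F_{3^{2m}}}$ belongs to $\mathcal C_3(\mathbb D_d)$.
   Context: Let $m\ge 2$ be an integer. For $s\in\{m,2m\}$ let $\mathrm{Tr}_s:\mathbb F_{3^s}\to\mathbb F_3$ denote the absolute trace. Vectors in $\mathbb F_3^{3^{2m}}$ are indexed by $\mathbb F_{3^{2m}}$, and a function $f:\mathbb F_{3^{2m}}\to\mathbb F_3$ is identified with $(f(t))_{t\in\mathbb F_{3^{2m}}}$. Let $\mathcal C(2m,3)=\{(\mathrm{Tr}_{2m}(at^{3^m+1}+bt)+h)_{t\in\mathbb F_{3^{2m}}}: a\in\mathbb F_{3^m}, b\in\mathbb F_{3^{2m}}, h\in\mathbb F_3\}$, let $d$ be its minimum nonzero Hamming weight, let $\mathbb D_d$ be the incidence structure on $\mathbb F_{3^{2m}}$ whose blocks are the supports of the weight-$d$ codewords, and let $\mathcal C_3(\mathbb D_d)$ be the $\mathbb F_3$-span of the incidence vectors of the blocks (entry $1$ on the block, $0$ elsewhere). *)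

(* Defs.v *)
From HB Require Import structures.
From mathcomp Require Import all_boot all_order all_algebra all_field.
Set Implicit Arguments. Unset Strict Implicit. Unset Printing Implicit Defensive.
Import GRing.Theory.
Local Open Scope ring_scope.

(* F plays the role of F_{3^{2m}}; F_3 is identified with the prime subfield
   {0,1,2} = {k%:R | k : 'I_3} of F (F has characteristic 3). *)
Section Defs.
Variables (F : finFieldType) (m : nat).

Definition tr2m (x : F) : F := \sum_(i < 2 * m) x ^+ (3 ^ i).

Definition in_sub (a : F) : bool := a ^+ (3 ^ m) == a.

Definition cw (a b : F) (k : 'I_3) : {ffun F -> F} :=
  [ffun t => tr2m (a * t ^+ (3 ^ m + 1) + b * t) + (k : nat)%:R].

Definition code : {set {ffun F -> F}} :=
  [set c | [exists a, exists b, exists k : 'I_3, in_sub a && (c == cw a b k)]].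

Definition support (c : {ffun F -> F}) : {set F} := [set t | c t != 0].
Definition wt (c : {ffun F -> F}) : nat := #|support c|.

Definition is_min_weight (d : nat) : Prop :=
  (exists2 c, c \in code & (c != 0) && (wt c == d)) /\
  (forall c, c \in code -> c != 0 -> (d <= wt c)%N).

Definition blocks (d : nat) : {set {set F}} :=
  [set B | [exists c in code, (wt c == d) && (B == support c)]].

(* the F_3-span C_3(D_d) of the incidence vectors of the blocks *)
Definition in_span_blocks (d : nat) (v : {ffun F -> F}) : Prop :=
  exists coef : {set F} -> 'I_3,
    forall t, v t = \sum_(B in blocks d) (coef B : nat)%:R * (t \in B)%:R.

End Defs.

(* Main.v *)
Require Import Defs.
From HB Require Import structures.
From mathcomp Require Import all_boot all_order all_algebra all_field.
From mathcomp Require Import ring zify.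
Set Implicit Arguments. Unset Strict Implicit. Unset Printing Implicit Defensive.
Import GRing.Theory.
Local Open Scope ring_scope.

Lemma char3 (F : finFieldType) m : #|F| = (3 ^ (2 * m))%N -> (0 < m)%N -> (3%:R : F) = 0.
Proof.
move=> hF hm; have h3 : (3 \in [pchar F])%N.
  by apply: (@card_finPcharP _ 3 (2 * m)) => //.
exact: pcharf0 h3.
Qed.

Lemma cube_add (F : finFieldType) (x y : F) : (3%:R : F) = 0 -> (x + y) ^+ 3 = x ^+ 3 + y ^+ 3.
Proof.
move=> h3.
have -> : (x + y) ^+ 3 = x ^+ 3 + y ^+ 3 + 3%:R * (x^+2 * y + x * y^+2) by ring.
by rewrite h3 mul0r addr0.
Qed.

Lemma pow3_add (F : finFieldType) (x y : F) i : (3%:R : F) = 0 ->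
  (x + y) ^+ (3 ^ i) = x ^+ (3 ^ i) + y ^+ (3 ^ i).
Proof.
move=> h3; elim: i => [|i IH]; first by rewrite !expr1.
by rewrite expnSr !exprM IH cube_add.
Qed.

Lemma cube_sum (F : finFieldType) (h3 : (3%:R : F) = 0) I (r : seq I) (P : pred I) (f : I -> F) :
  (\sum_(i <- r | P i) f i) ^+ 3 = \sum_(i <- r | P i) f i ^+ 3.
Proof.
apply: (big_morph (fun x : F => x ^+ 3)) => [x y|]; first exact: cube_add.
by rewrite expr0n.
Qed.

Lemma tr_add (F : finFieldType) m (h3 : (3%:R : F) = 0) (x y : F) :
  tr2m m (x + y) = tr2m m x + tr2m m y.
Proof. by rewrite /tr2m -big_split; apply: eq_bigr => i _; rewrite pow3_add. Qed.

Lemma tr_opp (F : finFieldType) m (h3 : (3%:R : F) = 0) (x : F) :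
  tr2m m (- x) = - tr2m m x.
Proof.
apply/eqP; rewrite -subr_eq0 opprK -tr_add // addNr /tr2m big1 // => i _.
by rewrite expr0n expn_eq0.
Qed.

Lemma tr_zero (F : finFieldType) m : tr2m m (0 : F) = 0.
Proof. by rewrite /tr2m big1 // => i _; rewrite expr0n expn_eq0. Qed.

Lemma tr_cube (F : finFieldType) m (h3 : (3%:R : F) = 0)
  (hc : forall x : F, x ^+ (3 ^ (2 * m)) = x) (x : F) :
  tr2m m (x ^+ 3) = tr2m m x.
Proof.
rewrite /tr2m.
have e2 : x + \sum_(i < 2 * m) x ^+ (3 ^ (bump 0 i)) =
    \sum_(i < 2 * m) x ^+ (3 ^ i) + x ^+ (3 ^ (2 * m)).
  have := big_ord_recl (2 * m) (fun i : 'I_(2 * m).+1 => x ^+ (3 ^ i)).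
  have := big_ord_recr (2 * m) (fun i : 'I_(2 * m).+1 => x ^+ (3 ^ i)).
  by move=> E2 E1; rewrite -[RHS]E2 E1 /= expn0 expr1.
rewrite hc in e2.
have -> : \sum_(i < 2 * m) (x ^+ 3) ^+ (3 ^ i) = \sum_(i < 2 * m) x ^+ (3 ^ (bump 0 i)).
  by apply: eq_bigr => i _; rewrite -exprM /bump /= add1n expnS.
rewrite addrC in e2.
by apply: (addIr x); rewrite e2.
Qed.

Lemma tr_pow (F : finFieldType) m (h3 : (3%:R : F) = 0)
  (hc : forall x : F, x ^+ (3 ^ (2 * m)) = x) (x : F) k :
  tr2m m (x ^+ (3 ^ k)) = tr2m m x.
Proof.
elim: k => [|k IH]; first by rewrite expr1.
by rewrite expnSr exprM tr_cube.
Qed.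

Lemma tr_F3 (F : finFieldType) m (h3 : (3%:R : F) = 0)
  (hc : forall x : F, x ^+ (3 ^ (2 * m)) = x) (x : F) :
  (tr2m m x) ^+ 3 = tr2m m x.
Proof.
rewrite -[RHS](tr_cube h3 hc) /tr2m cube_sum //; apply: eq_bigr => i _.
by rewrite -!exprM mulnC.
Qed.

Lemma pow3k_F3 (F : finFieldType) (k : F) i : k ^+ 3 = k -> k ^+ (3 ^ i) = k.
Proof.
move=> hk; elim: i => [|i IH]; first by rewrite expr1.
by rewrite expnSr exprM IH.
Qed.

Lemma tr_scal (F : finFieldType) m (k x : F) : k ^+ 3 = k ->
  tr2m m (k * x) = k * tr2m m x.
Proof.
move=> hk; rewrite /tr2m mulr_sumr; apply: eq_bigr => i _.
by rewrite exprMn (pow3k_F3 _ hk).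
Qed.

Lemma F3_elem (F : finFieldType) (h3 : (3%:R : F) = 0) (x : F) :
  x ^+ 3 = x -> exists k : 'I_3, x = (k : nat)%:R.
Proof.
move=> hx.
have e : x * (x - 1) * (x - 2%:R) = 0.
  have -> : x * (x - 1) * (x - 2%:R) = x ^+ 3 - x - 3%:R * (x ^+ 2 - x) by ring.
  by rewrite h3 mul0r subr0 hx subrr.
move: e => /eqP; rewrite !mulf_eq0 !subr_eq0 => /orP[/orP[]|] /eqP ->.
- by exists ord0.
- by exists (inord 1); rewrite inordK.
- by exists (inord 2); rewrite inordK.
Qed.

Lemma F3_nat (F : finFieldType) (h3 : (3%:R : F) = 0) n : ((n%:R : F) ^+ 3 = n%:R).
Proof.
elim: n => [|n IH]; first by rewrite expr0n.
by rewrite -addn1 natrD cube_add // IH expr1n.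
Qed.

Lemma F3_addc (F : finFieldType) (h3 : (3%:R : F) = 0) (x y : F) :
  x ^+ 3 = x -> y ^+ 3 = y -> (x + y) ^+ 3 = x + y.
Proof. by move=> hx hy; rewrite cube_add // hx hy. Qed.

Lemma F3_mulc (F : finFieldType) (x y : F) :
  x ^+ 3 = x -> y ^+ 3 = y -> (x * y) ^+ 3 = x * y.
Proof. by move=> hx hy; rewrite exprMn hx hy. Qed.

Lemma F3_oppc (F : finFieldType) (x : F) : x ^+ 3 = x -> (- x) ^+ 3 = - x.
Proof. by move=> hx; rewrite -mulN1r exprMn hx; congr (_ * _); rewrite exprS sqrrN expr1n mulr1. Qed.

Lemma F3_invc (F : finFieldType) (x : F) : x ^+ 3 = x -> (x^-1) ^+ 3 = x^-1.
Proof. by move=> hx; rewrite exprVn hx. Qed.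

Lemma nonroot_exists (F : finFieldType) (p : {poly F}) :
  p != 0 -> (size p <= #|F|)%N -> exists x, ~~ root p x.
Proof.
move=> p0 hs; case: (boolP [forall x, root p x]) => [/forallP H|].
  have hall : all (root p) (enum F) by apply/allP => x _; apply: H.
  have := max_poly_roots p0 hall (enum_uniq F).
  by rewrite -cardE => /leq_trans/(_ hs); rewrite ltnn.
by rewrite negb_forall => /existsP[x hx]; exists x.
Qed.

Lemma tr_nondeg (F : finFieldType) m (hm : (0 < m)%N) (hF : #|F| = (3 ^ (2 * m))%N)
  (y : F) : y != 0 -> exists t, tr2m m (y * t) != 0.
Proof.
move=> y0.
pose p := \sum_(i < 2 * m) (y ^+ (3 ^ i)) *: ('X^(3 ^ i) : {poly F}).
have hp t : p.[t] = tr2m m (y * t).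
  rewrite /p horner_sum /tr2m; apply: eq_bigr => i _.
  by rewrite hornerZ hornerXn exprMn.
have p1 : p`_1 = y.
  rewrite /p coef_sumMXn.
  have h0 : (0 < 2 * m)%N by lia.
  rewrite (bigD1 (Ordinal h0)) //= expn0 expr1 big1 ?addr0 // => i.
  move=> /andP[/eqP e ne]; case/eqP: ne; apply: val_inj => /=.
  by move: e; case: (nat_of_ord i) => // k; rewrite expnS; lia.
have pn0 : p != 0 by apply/eqP => e; move: p1; rewrite e coef0 => /esym/eqP; rewrite (negbTE y0).
have hs : (size p <= #|F|)%N.
  apply: leq_trans (size_sum _ _ _) _.
  apply/bigmax_leqP => i _.
  apply: leq_trans (size_scale_leq _ _) _; rewrite size_polyXn hF.
  have : (3 ^ i < 3 ^ (2 * m))%N by rewrite ltn_exp2l.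
  by [].
have [x hx] := nonroot_exists pn0 hs.
by exists x; rewrite -hp.
Qed.

Lemma nonF3_exists (F : finFieldType) m (hm : (0 < m)%N) (hF : #|F| = (3 ^ (2 * m))%N) :
  exists x : F, x ^+ 3 != x.
Proof.
pose p : {poly F} := 'X^3 - 'X.
have sp : size p = 4%N.
  by rewrite /p size_polyDl ?size_polyXn // size_opp size_polyX.
have pn0 : p != 0 by rewrite -size_poly_eq0 sp.
have hs : (size p <= #|F|)%N.
  rewrite sp hF; have : (3 ^ 2 <= 3 ^ (2 * m))%N by rewrite leq_exp2l; lia.
  by apply: leq_trans.
have [x hx] := nonroot_exists pn0 hs.
exists x; move: hx; rewrite /root /p hornerD hornerN hornerXn hornerX subr_eq0.
by [].
Qed.

Definition compose (F : finFieldType) (c : {ffun F -> F}) (l s : F) : {ffun F -> F} :=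
  [ffun t => c (l * t + s)].

Lemma fq_fq (F : finFieldType) m (hc : forall x : F, x ^+ (3 ^ (2 * m)) = x) (x : F) :
  (x ^+ (3 ^ m)) ^+ (3 ^ m) = x.
Proof. by rewrite -exprM -expnD addnn -mul2n hc. Qed.

Lemma pow_q1 (F : finFieldType) m (x : F) : x ^+ (3 ^ m + 1) = x ^+ (3 ^ m) * x.
Proof. by rewrite addn1 exprSr. Qed.

Lemma cw_compose (F : finFieldType) m (h3 : (3%:R : F) = 0)
  (hc : forall x : F, x ^+ (3 ^ (2 * m)) = x) (a b l s t : F) :
  a ^+ (3 ^ m) = a ->
  tr2m m (a * (l * t + s) ^+ (3 ^ m + 1) + b * (l * t + s)) =
  tr2m m (a * l ^+ (3 ^ m + 1) * t ^+ (3 ^ m + 1) + (2%:R * a * l * s ^+ (3 ^ m) + b * l) * t)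
  + tr2m m (a * s ^+ (3 ^ m + 1) + b * s).
Proof.
move=> ha; set q := (3 ^ m)%N.
have fadd (x y : F) : (x + y) ^+ q = x ^+ q + y ^+ q by rewrite /q pow3_add.
set u := a * l * s ^+ q * t.
have hu : u ^+ q = a * l ^+ q * s * t ^+ q.
  by rewrite /u !exprMn ha fq_fq.
rewrite !pow_q1 fadd !exprMn.
have -> : a * ((l ^+ q * t ^+ q + s ^+ q) * (l * t + s)) + b * (l * t + s) =
  (a * (l ^+ q * l) * (t ^+ q * t) + (2%:R * a * l * s ^+ q + b * l) * t)
  + (a * (s ^+ q * s) + b * s) + (u ^+ q - u).
  by rewrite hu /u; ring.
by rewrite !tr_add // tr_opp // (tr_pow h3 hc) subrr addr0.
Qed.

Lemma compose_code (F : finFieldType) m (h3 : (3%:R : F) = 0)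
  (hc : forall x : F, x ^+ (3 ^ (2 * m)) = x) (c : {ffun F -> F}) (l s : F) :
  c \in @code F m -> compose c l s \in @code F m.
Proof.
rewrite !inE => /existsP[a /existsP[b /existsP[k /andP[ha /eqP->]]]].
move/eqP: ha => ha.
have [k' hk'] : exists k' : 'I_3,
    tr2m m (a * s ^+ (3 ^ m + 1) + b * s) + (k : nat)%:R = (k' : nat)%:R.
  have [k' e] := F3_elem h3 (F3_addc h3 (tr_F3 h3 hc (a * s ^+ (3 ^ m + 1) + b * s)) (F3_nat h3 k)).
  by exists k'.
apply/existsP; exists (a * l ^+ (3 ^ m + 1)).
apply/existsP; exists (2%:R * a * l * s ^+ (3 ^ m) + b * l).
apply/existsP; exists k'; apply/andP; split.
  by rewrite /in_sub exprMn ha pow_q1 exprMn fq_fq // [l * _]mulrC.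

by apply/eqP/ffunP => t; rewrite !ffunE cw_compose // -addrA hk'.

Qed.

Lemma wt_compose (F : finFieldType) (c : {ffun F -> F}) (l s : F) :
  l != 0 -> wt (compose c l s) = wt c.
Proof.
move=> l0; rewrite /wt.
have -> : Defs.support (compose c l s) = (fun t => l * t + s) @^-1: Defs.support c.
  by apply/setP => t; rewrite !inE ffunE.
by apply: card_preimset => x y /addIr /(mulfI l0).
Qed.

Lemma code_F3 (F : finFieldType) m (h3 : (3%:R : F) = 0)
  (hc : forall x : F, x ^+ (3 ^ (2 * m)) = x) (c : {ffun F -> F}) t :
  c \in @code F m -> c t ^+ 3 = c t.
Proof.
rewrite !inE => /existsP[a /existsP[b /existsP[k /andP[ha /eqP->]]]].
by rewrite ffunE; apply: F3_addc => //; [apply: tr_F3 | apply: F3_nat].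
Qed.

Lemma F3_sq (F : finFieldType) (x : F) : x ^+ 3 = x -> (x != 0)%:R = x ^+ 2.
Proof.
move=> hx; case: eqP => [->|/eqP x0]; first by rewrite expr0n.
apply: (mulfI x0); rewrite -exprS hx /= mulr1.
by [].
Qed.

Lemma block_compose (F : finFieldType) m (h3 : (3%:R : F) = 0)
  (hc : forall x : F, x ^+ (3 ^ (2 * m)) = x) d (B : {set F}) (l s : F) :
  l != 0 -> B \in @blocks F m d -> [set t | l * t + s \in B] \in @blocks F m d.
Proof.
move=> l0; rewrite !inE => /existsP[c /andP[cc /andP[/eqP wc /eqP ->]]].
apply/existsP; exists (compose c l s); rewrite compose_code //= wt_compose // wc eqxx /=.
by apply/eqP/setP => t; rewrite !inE ffunE.
Qed.

Lemma block_ind (F : finFieldType) m (h3 : (3%:R : F) = 0)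
  (hc : forall x : F, x ^+ (3 ^ (2 * m)) = x) (c : {ffun F -> F}) t :
  c \in @code F m -> (t \in Defs.support c)%:R = c t ^+ 2.
Proof. by move=> cc; rewrite inE F3_sq // (code_F3 h3 hc). Qed.

Definition rep (F : finFieldType) m d (f : F -> F) : Prop :=
  exists s : seq (nat * {set F}), all (fun p => p.2 \in @blocks F m d) s /\
    forall t, f t = \sum_(p <- s) (p.1)%:R * (t \in p.2)%:R.

Lemma nat_mod3 (F : finFieldType) (h3 : (3%:R : F) = 0) n : ((n %% 3)%N%:R : F) = n%:R.
Proof. by rewrite {2}(divn_eq n 3) natrD natrM h3 mulr0 add0r. Qed.

Lemma rep_span (F : finFieldType) m d (h3 : (3%:R : F) = 0) (f : F -> F) :
  rep m d f -> in_span_blocks m d [ffun t => f t].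
Proof.
case=> s [hall hf].
pose cnt (B : {set F}) := (\sum_(p <- s | p.2 == B) p.1)%N.
exists (fun B => inord (cnt B %% 3)) => t.
rewrite ffunE hf.
rewrite [RHS](eq_bigr (fun B => (cnt B)%:R * (t \in B)%:R)); last first.
  by move=> B _; rewrite inordK ?ltn_pmod // nat_mod3.
rewrite /cnt; clear cnt hf.
elim: s hall => [|p s IH] /=.
  by move=> _; rewrite big_nil big1 // => B _; rewrite big_nil mul0r.
case/andP=> pb hall; rewrite big_cons IH //.
have -> : \sum_(B in @blocks F m d) (\sum_(p0 <- (p :: s) | p0.2 == B) p0.1)%N%:R * (t \in B)%:R
  = \sum_(B in @blocks F m d) ((p.2 == B)%:R * (p.1)%:R * (t \in B)%:R
       + (\sum_(p0 <- s | p0.2 == B) p0.1)%N%:R * (t \in B)%:R) :> F.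
  apply: eq_bigr => B _; rewrite big_cons; case: eqP => _; rewrite ?natrD ?mulrDl ?mul1r ?mul0r ?add0r //.

rewrite big_split /=; congr (_ + _).
rewrite (bigD1 p.2) //= eqxx mul1r big1 ?addr0 // => B /andP[_ ne].
by rewrite eq_sym (negbTE ne) !mul0r.
Qed.

Lemma rep_ext (F : finFieldType) m d (f g : F -> F) :
  (forall t, f t = g t) -> rep m d f -> rep m d g.
Proof. by move=> e [s [h1 h2]]; exists s; split => // t; rewrite -e. Qed.

Lemma rep_scale (F : finFieldType) m d (h3 : (3%:R : F) = 0)
  (hc : forall x : F, x ^+ (3 ^ (2 * m)) = x) (f : F -> F) (l : F) :
  l != 0 -> rep m d f -> rep m d (fun t => f (l * t)).
Proof.
move=> l0 [s [h1 h2]].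
exists [seq (p.1, [set t : F | l * t + 0 \in p.2]) | p : nat * {set F} <- s]; split.
  rewrite all_map; apply/allP => p ps /=.
  by apply: block_compose => //; move/allP: h1; apply.
move=> t; rewrite h2 big_map; apply: eq_bigr => p _ /=.
by rewrite inE addr0.
Qed.

Lemma rep_list (F : finFieldType) m d (s : seq (nat * {set F})) :
  all (fun p => p.2 \in @blocks F m d) s ->
  rep m d (fun t => \sum_(p <- s) (p.1)%:R * (t \in p.2)%:R).
Proof. by move=> h; exists s. Qed.

Lemma blk (F : finFieldType) m d (c : {ffun F -> F}) :
  c \in @code F m -> wt c = d -> Defs.support c \in @blocks F m d.
Proof. by move=> cc wc; rewrite inE; apply/existsP; exists c; rewrite cc wc !eqxx. Qed.

Lemma two3 (F : finFieldType) (h3 : (3%:R : F) = 0) : (2%:R : F) = -1.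
Proof. by apply/eqP; rewrite -subr_eq0 opprK -(natrD _ 2 1) h3. Qed.

Lemma comp_blk (F : finFieldType) m d (h3 : (3%:R : F) = 0)
  (hc : forall x : F, x ^+ (3 ^ (2 * m)) = x) (c : {ffun F -> F}) s :
  c \in @code F m -> wt c = d -> Defs.support (compose c 1 s) \in @blocks F m d.
Proof.
move=> cc wc; apply: blk; first exact: compose_code.
by rewrite wt_compose ?oner_eq0.
Qed.

Lemma comp_ind (F : finFieldType) m (h3 : (3%:R : F) = 0)
  (hc : forall x : F, x ^+ (3 ^ (2 * m)) = x) (c : {ffun F -> F}) s t :
  c \in @code F m -> (t \in Defs.support (compose c 1 s))%:R = c (t + s) ^+ 2.
Proof.
move=> cc; rewrite (block_ind h3 hc) ?ffunE ?mul1r //.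
exact: compose_code.
Qed.

Lemma tr_solve (F : finFieldType) m (hm : (0 < m)%N) (hF : #|F| = (3 ^ (2 * m))%N)
  (h3 : (3%:R : F) = 0) (hc : forall x : F, x ^+ (3 ^ (2 * m)) = x) (y v : F) :
  y != 0 -> v ^+ 3 = v -> exists s, tr2m m (y * s) = v.
Proof.
move=> y0 hv; have [t1 e0] := tr_nondeg hm hF y0.
set e := tr2m m (y * t1) in e0.
have he : e ^+ 3 = e by apply: tr_F3.
exists (v / e * t1).
rewrite mulrCA tr_scal -/e ?mulfVK //.
by apply: F3_mulc => //; apply: F3_invc.
Qed.

Lemma caseA (F : finFieldType) m (hm : (0 < m)%N) (hF : #|F| = (3 ^ (2 * m))%N)
  d (b0 : F) (k0 : 'I_3) :
  b0 != 0 -> cw m 0 b0 k0 \in @code F m -> wt (cw m 0 b0 k0) = d ->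
  rep m d (fun t => tr2m m (b0 * t)).
Proof.
move=> b00 cc wc.
have h3 : (3%:R : F) = 0 by apply: (char3 hF).
have hc : forall x : F, x ^+ (3 ^ (2 * m)) = x by move=> x; rewrite -hF expf_card.
have hk : (k0 : nat)%:R ^+ 3 = (k0 : nat)%:R :> F by apply: F3_nat.
have [s1 e1] := tr_solve hm hF h3 hc b00
   (F3_addc h3 (F3_nat h3 1) (F3_oppc hk)).
have [s2 e2] := tr_solve hm hF h3 hc b00
   (F3_addc h3 (F3_oppc (F3_nat h3 1)) (F3_oppc hk)).
set c0 := cw m 0 b0 k0 in cc wc *.
have ev x : c0 x = tr2m m (b0 * x) + (k0 : nat)%:R by rewrite ffunE mul0r add0r.
apply: (rep_ext _ (rep_list (s := [:: (1%N, Defs.support (compose c0 1 s1));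
                                     (2%N, Defs.support (compose c0 1 s2))]) _)).
  move=> t; rewrite !big_cons big_nil addr0 !(comp_ind h3 hc) // !ev !mulrDr !tr_add //.
  rewrite e1 e2.
  set L := tr2m m (b0 * t).
  have -> : 1%:R * (L + (1 - (k0 : nat)%:R) + (k0 : nat)%:R) ^+ 2
    + 2%:R * (L + (-1 - (k0 : nat)%:R) + (k0 : nat)%:R) ^+ 2
    = L + 3%:R * (L ^+ 2 - L + 1) :> F by ring.
  by rewrite h3 mul0r addr0.
by rewrite /= !comp_blk.
Qed.

Definition Qf (F : finFieldType) m (a x : F) := tr2m m (a * x ^+ (3 ^ m + 1)).
Definition Bf (F : finFieldType) m (a x y : F) := tr2m m (2%:R * a * y ^+ (3 ^ m) * x).

Lemma Q_add (F : finFieldType) m (h3 : (3%:R : F) = 0)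
  (hc : forall x : F, x ^+ (3 ^ (2 * m)) = x) (a x y : F) :
  a ^+ (3 ^ m) = a -> Qf m a (x + y) = Qf m a x + Qf m a y + Bf m a x y.
Proof.
move=> ha; rewrite /Qf /Bf; set q := (3 ^ m)%N.
have fadd (u v : F) : (u + v) ^+ q = u ^+ q + v ^+ q by rewrite /q pow3_add.
set u := a * y ^+ q * x.
have hu : u ^+ q = a * y * x ^+ q by rewrite /u !exprMn ha fq_fq.
rewrite !pow_q1 fadd.
have -> : a * ((x ^+ q + y ^+ q) * (x + y)) =
  a * (x ^+ q * x) + a * (y ^+ q * y) + 2%:R * a * y ^+ q * x + (u ^+ q - u).
  by rewrite hu /u; ring.
by rewrite !tr_add // tr_opp // (tr_pow h3 hc) subrr addr0.
Qed.

Lemma Bf_add (F : finFieldType) m (h3 : (3%:R : F) = 0) (a x y1 y2 : F) :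
  Bf m a x (y1 + y2) = Bf m a x y1 + Bf m a x y2.
Proof.
rewrite /Bf -tr_add // pow3_add //; congr tr2m; ring.
Qed.

Lemma Bf_scal (F : finFieldType) m (a x y k : F) :
  k ^+ 3 = k -> Bf m a x (k * y) = k * Bf m a x y.
Proof.
move=> hk; rewrite /Bf -tr_scal // exprMn (pow3k_F3 _ hk); congr tr2m; ring.
Qed.

Lemma Bf_opp (F : finFieldType) m (h3 : (3%:R : F) = 0) (a x y : F) :
  Bf m a x (- y) = - Bf m a x y.
Proof.
rewrite -mulN1r Bf_scal ?mulN1r //.
by apply: F3_oppc; rewrite expr1n.
Qed.

Lemma Q_neg (F : finFieldType) m (h3 : (3%:R : F) = 0)
  (hc : forall x : F, x ^+ (3 ^ (2 * m)) = x) (a x : F) :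
  a ^+ (3 ^ m) = a -> Qf m a (- x) = Qf m a x.
Proof.
move=> ha; have := Q_add h3 hc x (- x) ha.
rewrite subrr Bf_opp //.
have -> : Qf m a 0 = 0 by rewrite /Qf pow_q1 !mulr0 tr_zero.
have -> : Bf m a x x = 2%:R * Qf m a x.
  rewrite /Bf /Qf -tr_scal ?F3_nat // pow_q1; congr tr2m; ring.
rewrite (two3 h3) => /eqP; rewrite eq_sym -subr_eq0.
have -> : Qf m a x + Qf m a (- x) + - (-1 * Qf m a x) - 0 =
   Qf m a (- x) - Qf m a x + 3%:R * Qf m a x by ring.
by rewrite h3 mul0r addr0 subr_eq0 => /eqP.
Qed.

Lemma exists_u (F : finFieldType) m (hm : (0 < m)%N) (hF : #|F| = (3 ^ (2 * m))%N)
  (a c : F) : a != 0 ->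
  exists u : F, (u ^+ 3 != u) && (c + 2%:R * tr2m m (a * u) != 0).
Proof.
move=> a0.
have h3 : (3%:R : F) = 0 by apply: (char3 hF).
have hc : forall x : F, x ^+ (3 ^ (2 * m)) = x by move=> x; rewrite -hF expf_card.
have h2 := two3 h3.
case: (boolP [exists u, (u ^+ 3 != u) && (c + 2%:R * tr2m m (a * u) != 0)]).
  by move/existsP.
rewrite negb_exists => /forallP H.
have H' u : u ^+ 3 != u -> c = tr2m m (a * u).
  move=> hu; move: (H u); rewrite hu /= negbK h2 mulN1r subr_eq0 => /eqP //.
have [y0 hy0] := nonF3_exists hm hF.
have hy0' : (- y0) ^+ 3 != - y0.
  by apply: contra hy0 => /eqP /F3_oppc; rewrite opprK => ->.
have T0 : tr2m m (a * y0) = 0.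
  have e1 := H' _ hy0; have e2 := H' _ hy0'.
  rewrite mulrN tr_opp // e1 in e2.
  have : tr2m m (a * y0) + tr2m m (a * y0) = 0 by rewrite {2}e2 subrr.
  by rewrite -mulr2n -mulr_natl h2 mulN1r => /eqP; rewrite oppr_eq0 => /eqP.
have c0 : c = 0 by rewrite (H' _ hy0).
have [t1 ht1] := tr_nondeg hm hF a0.
case: (boolP (t1 ^+ 3 == t1)) => [/eqP ht| ht]; last by rewrite -(H' _ ht) c0 eqxx in ht1.
have hs : (t1 + y0) ^+ 3 != t1 + y0.
  by rewrite cube_add // ht; apply: contra hy0 => /eqP /addrI ->.
move: (H' _ hs); rewrite mulrDr tr_add // T0 addr0 -c0 c0 => e.
by rewrite -e eqxx in ht1.
Qed.

Lemma alg6 (F : comRingType) (h4 : (4%:R : F) = 1) (Qt q1 q2 bt Y1 Y2 w : F) :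
  1 * (Qt + q1 + Y1 + w) ^+ 2 +
  (-1 * (Qt + q1 - Y1 + w) ^+ 2 +
   (1 * (Qt + q2 + Y2 + w) ^+ 2 +
    (-1 * (Qt + q2 - Y2 + w) ^+ 2 +
     (1 * (Qt + (q1 + q2 + bt) - (Y1 + Y2) + w) ^+ 2 +
      -1 * (Qt + (q1 + q2 + bt) + (Y1 + Y2) + w) ^+ 2)))) =
  - (q2 + bt) * Y1 + - (q1 + bt) * Y2.
Proof.
set R := (X in _ = X).
have -> : R = 4%:R * R by rewrite h4 mul1r.
rewrite /R; ring.
Qed.

Lemma caseB (F : finFieldType) m (hm : (0 < m)%N) (hF : #|F| = (3 ^ (2 * m))%N)
  d (a0 b0 : F) (k0 : 'I_3) :
  a0 != 0 -> a0 ^+ (3 ^ m) = a0 -> cw m a0 b0 k0 \in @code F m -> wt (cw m a0 b0 k0) = d ->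
  exists y : F, y != 0 /\ rep m d (fun t => tr2m m (y * t)).
Proof.
move=> a00 ha cc wc.
have h3 : (3%:R : F) = 0 by apply: (char3 hF).
have hc : forall x : F, x ^+ (3 ^ (2 * m)) = x by move=> x; rewrite -hF expf_card.
have h2 := two3 h3.
have h4 : (4%:R : F) = 1 by rewrite [4%:R](natrD _ 3 1) h3 add0r.
set c0 := cw m a0 b0 k0 in cc wc *.
have a2 : 2%:R * a0 != 0 by rewrite h2 mulN1r oppr_eq0.
pose s0 := (b0 / (2%:R * a0)) ^+ (3 ^ m).
have hs0 : 2%:R * a0 * s0 ^+ (3 ^ m) = b0 by rewrite fq_fq // mulrC divfK.
pose w := (k0 : nat)%:R - Qf m a0 s0.
have ev x : c0 x = Qf m a0 (x + s0) + w.
  rewrite ffunE Q_add // /Bf hs0 /w /Qf tr_add //; ring.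
have [u /andP[hu hgam]] := exists_u hm hF (Qf m a0 1) a00.
pose th := u ^+ (3 ^ m).
have hthq : th ^+ (3 ^ m) = u by rewrite fq_fq.
have hbeta : Bf m a0 1 th = 2%:R * tr2m m (a0 * u).
  by rewrite /Bf hthq mulr1 -tr_scal ?F3_nat // mulrA.
have hth : th ^+ 3 != th.
  apply: contra hu => /eqP e; have := pow3k_F3 m e; rewrite hthq => ->.
  by rewrite e.
have FQ x : Qf m a0 x ^+ 3 = Qf m a0 x by apply: tr_F3.
have FB x y : Bf m a0 x y ^+ 3 = Bf m a0 x y by apply: tr_F3.
set q1 := Qf m a0 1; set q2 := Qf m a0 th; set bt := Bf m a0 1 th.
have hg : q1 + bt != 0 by rewrite /bt hbeta.
pose z := (- (q2 + bt)) * 1 + (- (q1 + bt)) * th.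
have hz : z != 0.
  apply: contra hth => /eqP e.
  have eth : th = - (q2 + bt) / (q1 + bt).
    apply: (mulfI hg); rewrite [RHS]mulrC divfK //.
    apply/eqP; rewrite -subr_eq0 opprK; move: e; rewrite /z mulr1 mulNr addrC.
    by rewrite -opprD => /eqP; rewrite oppr_eq0.
  apply/eqP; rewrite eth; apply: F3_mulc; last apply: F3_invc.
    by apply: F3_oppc; apply: (F3_addc h3); [apply: FQ | apply: FB].
  by apply: (F3_addc h3); [apply: FQ | apply: FB].
exists (2%:R * a0 * z ^+ (3 ^ m)); split.
  by rewrite mulf_neq0 // expf_neq0.
set L := [:: (1%N, Defs.support (compose c0 1 (1 - s0)));
            (2%N, Defs.support (compose c0 1 (-1 - s0)));
            (1%N, Defs.support (compose c0 1 (th - s0)));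
            (2%N, Defs.support (compose c0 1 (- th - s0)));
            (1%N, Defs.support (compose c0 1 (- (1 + th) - s0)));
            (2%N, Defs.support (compose c0 1 ((1 + th) - s0)))].
apply: (rep_ext _ (rep_list (s := L) _)); last by rewrite /= !comp_blk.
move=> t; rewrite /L !big_cons big_nil addr0 !(comp_ind h3 hc) //.
have evs s : c0 (t + (s - s0)) = Qf m a0 (t + s) + w.
  by rewrite ev [t + (s - s0)]addrA subrK.
rewrite !evs.
have Qm s : Qf m a0 (t + - s) = Qf m a0 t + Qf m a0 s - Bf m a0 t s.
  by rewrite Q_add // Q_neg // Bf_opp.
have Qp s : Qf m a0 (t + s) = Qf m a0 t + Qf m a0 s + Bf m a0 t s by rewrite Q_add.
rewrite !Qm !Qp (Q_add h3 hc 1 th ha) -/q1 -/q2 -/bt !Bf_add //.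
have -> : tr2m m (2%:R * a0 * z ^+ (3 ^ m) * t) = Bf m a0 t z by [].
rewrite /z Bf_add // !Bf_scal //; last first.
- by apply: F3_oppc; apply: (F3_addc h3); [apply: FQ | apply: FB].
- by apply: F3_oppc; apply: (F3_addc h3); [apply: FQ | apply: FB].
rewrite h2.
set Y1 := Bf m a0 t 1; set Y2 := Bf m a0 t th; set Qt := Qf m a0 t.
by rewrite /= alg6.
Qed.

Lemma caseC (F : finFieldType) m (hm : (0 < m)%N) (hF : #|F| = (3 ^ (2 * m))%N)
  d (hd : @is_min_weight F m d) (k0 : 'I_3) :
  cw m (0 : F) 0 k0 != 0 -> wt (cw m (0 : F) 0 k0) = d -> False.
Proof.
move=> cn0 wc.
have h3 : (3%:R : F) = 0 by apply: (char3 hF).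
have ev t : cw m (0 : F) 0 k0 t = (k0 : nat)%:R by rewrite ffunE !mul0r add0r tr_zero add0r.
have k0n : (k0 : nat)%:R != 0 :> F.
  apply: contra cn0 => /eqP e; apply/eqP/ffunP => t; by rewrite ev e ffunE.
have wF : wt (cw m (0 : F) 0 k0) = #|F|.
  by rewrite /wt -cardsT; apply: eq_card => t; rewrite !inE ev k0n.
pose c1 := cw m (0 : F) 1 ord0.
have c1c : c1 \in @code F m.
  rewrite inE; apply/existsP; exists 0; apply/existsP; exists 1; apply/existsP; exists ord0.
  by rewrite /in_sub expr0n expn_eq0 /= !eqxx.
have ev1 t : c1 t = tr2m m t by rewrite ffunE mul0r add0r mul1r addr0.
have c1n : c1 != 0.
  have [t ht] := tr_nondeg hm hF (oner_neq0 F).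
  apply/eqP => e; move: ht; rewrite mul1r -ev1 e ffunE eqxx //.
have wc1 : (wt c1 < #|F|)%N.
  rewrite /wt -cardsT; apply: proper_card; rewrite properT; apply/eqP => e.
  have : (0 : F) \in Defs.support c1 by rewrite e inE.
  by rewrite inE ev1 tr_zero eqxx.
have := (proj2 hd) c1 c1c c1n.
by rewrite -wc wF leqNgt wc1.
Qed.

Unset Implicit Arguments. Set Strict Implicit.

Theorem lemma3p6 (m : nat) (hm : (2 <= m)%N) (F : finFieldType)
  (hF : #|F| = (3 ^ (2 * m))%N) (d : nat) (hd : @is_min_weight F m d) :
  forall b : F, @in_span_blocks F m d [ffun t => @tr2m F m (b * t)].
Proof.
move=> b.
have hm1 : (0 < m)%N by lia.
have h3 : (3%:R : F) = 0 by apply: (char3 hF).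
have hc : forall x : F, x ^+ (3 ^ (2 * m)) = x by move=> x; rewrite -hF expf_card.
suff [y [y0 hy]] : exists y : F, y != 0 /\ rep m d (fun t => tr2m m (y * t)).
  apply: (rep_span h3 (f := fun t => tr2m m (b * t))).
  case: (eqVneq b 0) => [->|b0].
    by exists [::]; split => // t; rewrite big_nil mul0r tr_zero.
  have l0 : b / y != 0 by rewrite mulf_neq0 ?invr_neq0.
  apply: (rep_ext _ (rep_scale h3 hc l0 hy)) => t.
  by rewrite mulrA mulrC mulrA [_ * b]mulrC mulfK // mulrC.
case: (hd) => [[c cc /andP[cn0 /eqP wc]] _].
move: (cc); rewrite inE => /existsP[a0 /existsP[b0 /existsP[k0 /andP[ha /eqP ce]]]].
rewrite ce in cc wc cn0.
case: (eqVneq a0 0) => [a0z|a0n].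
  subst a0; case: (eqVneq b0 0) => [b0z|b0n].
    by subst b0; case: (caseC hm1 hF hd cn0 wc).
  by exists b0; split => //; apply: (caseA hm1 hF b0n cc wc).
by apply: (caseB hm1 hF a0n _ cc wc); apply/eqP.
Qed.
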